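(* Let $X,Y$ be proper metric spaces, $p\in[1,\infty)$, $f:X\to Y$ a continuous coarse map, $E^p_X$ an $L^p$-$X$-module and $E^p_Y$ an $L^p$-$Y$-module. Then for every $\varepsilon>0$ there exist an isometric operator $V_f:E^p_X\to E^p_Y$ and a contractive operator $V_f^+:E^p_Y\to E^p_X$ with $V_f^+V_f=I$ such that $\mathrm{supp}(V_f)\subseteq\{(x,y)\in X\times Y:d(f(x),y)\le\varepsilon\}$ and $\mathrm{supp}(V_f^+)\subseteq\{(y,x)\in Y\times X:d(f(x),y)\le\varepsilon\}$.
   Context: An $L^p$-$X$-module is $E^p_X=\ell^p(Z_X)\otimes\ell^p=\ell^p(Z_X,\ell^p(\mathbb N))$ with $Z_X\subseteq X$ a countable dense subset and $C_0(X)$ (and bounded Borel functions) acting by pointwise multiplication on the $Z_X$ coordinate; $\chi_U$ denotes multiplication by the indicator of $U$. For a bounded $T:E^p_X\to E^p_Y$, $\mathrm{supp}(T)$ is the set of $(x,y)\in X\times Y$ such that $\chi_VT\chi_U\neq0$ for all open neighbourhoods $U$ of $x$ and $V$ of $y$ (and analogously for operators $E^p_Y\to E^p_X$, giving subsets of $Y\times X$). A Borel map $f$ is coarse if preimages of bounded sets are bounded and for each $R>0$ there is $R'$ with $d(f(x),f(y))\le R'$ whenever $d(x,y)\le R$. *)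

(* Defs.v *)
From HB Require Import structures.
From mathcomp Require Import all_boot all_order all_algebra.
From mathcomp Require Import all_classical all_reals all_analysis.
From mathcomp Require Import complex.
Set Implicit Arguments. Unset Strict Implicit. Unset Printing Implicit Defensive.
Import Order.TTheory GRing.Theory Num.Theory.
Local Open Scope classical_set_scope.
Local Open Scope ring_scope.

Definition is_metric (R : realType) (X : Type) (d : X -> X -> R) : Prop :=
  [/\ (forall x y, 0 <= d x y),
      (forall x y, d x y = 0 <-> x = y),
      (forall x y, d x y = d y x) &
      (forall x y z, d x z <= d x y + d y z)].

Definition ball_d (R : realType) (X : Type) (d : X -> X -> R) (x : X) (r : R) : set X :=
  [set y | d x y < r].

Definition closed_ball_d (R : realType) (X : Type) (d : X -> X -> R) (x : X) (r : R) : set X :=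
  [set y | d x y <= r].

Definition open_d (R : realType) (X : Type) (d : X -> X -> R) (U : set X) : Prop :=
  forall x, U x -> exists r, 0 < r /\ ball_d d x r `<=` U.

Definition compact_d (R : realType) (X : Type) (d : X -> X -> R) (K : set X) : Prop :=
  forall (I : Type) (F : I -> set X), (forall i, open_d d (F i)) ->
    K `<=` \bigcup_i F i ->
    exists J : set I, finite_set J /\ K `<=` \bigcup_(i in J) F i.

Definition proper_metric (R : realType) (X : Type) (d : X -> X -> R) : Prop :=
  is_metric d /\ forall x r, compact_d d (closed_ball_d d x r).

Definition dense_d (R : realType) (X : Type) (d : X -> X -> R) (Z : set X) : Prop :=
  forall x r, 0 < r -> exists z, Z z /\ d x z < r.

Definition bounded_d (R : realType) (X : Type) (d : X -> X -> R) (S : set X) : Prop :=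
  exists r, forall a b, S a -> S b -> d a b <= r.

Definition continuous_d (R : realType) (X Y : Type) (dX : X -> X -> R) (dY : Y -> Y -> R)
  (f : X -> Y) : Prop :=
  forall x eps, 0 < eps -> exists delta, 0 < delta /\
    forall x', dX x x' < delta -> dY (f x) (f x') < eps.

Definition coarse_map (R : realType) (X Y : Type) (dX : X -> X -> R) (dY : Y -> Y -> R)
  (f : X -> Y) : Prop :=
  (forall B, bounded_d dY B -> bounded_d dX (f @^-1` B)) /\
  (forall r, 0 < r -> exists r', forall x y, dX x y <= r -> dY (f x) (f y) <= r').

(* ---------- L^p-X-modules E^p_X = l^p(Z_X, l^p(N)) ---------- *)
(* Vectors are functions X -> nat -> R[i] vanishing off Z_X (x) N. *)

Definition lp_sum (R : realType) (X : choiceType) (p : R) (u : X -> nat -> R[i]) : \bar R :=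
  (\esum_(i in [set: X * nat]) ((Normc.normc (u i.1 i.2)) `^ p)%:E)%E.

Definition in_Ep (R : realType) (X : choiceType) (Z : set X) (p : R)
  (u : X -> nat -> R[i]) : Prop :=
  (forall x n, ~ Z x -> u x n = 0) /\ (lp_sum p u < +oo)%E.

Definition lp_norm (R : realType) (X : choiceType) (p : R) (u : X -> nat -> R[i]) : R :=
  (fine (lp_sum p u)) `^ (p^-1).

Definition chi (R : realType) (X : Type) (U : set X) (u : X -> nat -> R[i]) : X -> nat -> R[i] :=
  fun x n => if `[< U x >] then u x n else 0.

(* bounded linear operator E^p_X -> E^p_Y (only its values on E^p_X matter) *)
Definition bounded_op (R : realType) (X Y : choiceType) (ZX : set X) (ZY : set Y) (p : R)
  (T : (X -> nat -> R[i]) -> (Y -> nat -> R[i])) : Prop :=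
  [/\ (forall u, in_Ep ZX p u -> in_Ep ZY p (T u)),
      (forall (a : R[i]) u v, in_Ep ZX p u -> in_Ep ZX p v ->
          T (fun x n => a * u x n + v x n) = (fun y n => a * T u y n + T v y n)) &
      (exists C : R, forall u, in_Ep ZX p u -> lp_norm p (T u) <= C * lp_norm p u)].

Definition isometric_op (R : realType) (X Y : choiceType) (ZX : set X) (ZY : set Y) (p : R)
  (T : (X -> nat -> R[i]) -> (Y -> nat -> R[i])) : Prop :=
  bounded_op ZX ZY p T /\ forall u, in_Ep ZX p u -> lp_norm p (T u) = lp_norm p u.

Definition contractive_op (R : realType) (X Y : choiceType) (ZX : set X) (ZY : set Y) (p : R)
  (T : (X -> nat -> R[i]) -> (Y -> nat -> R[i])) : Prop :=
  bounded_op ZX ZY p T /\ forall u, in_Ep ZX p u -> lp_norm p (T u) <= lp_norm p u.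

Definition in_supp (R : realType) (X Y : choiceType) (dX : X -> X -> R) (dY : Y -> Y -> R)
  (ZX : set X) (p : R) (T : (X -> nat -> R[i]) -> (Y -> nat -> R[i])) (x : X) (y : Y) : Prop :=
  forall (U : set X) (V : set Y), open_d dX U -> U x -> open_d dY V -> V y ->
    exists u, in_Ep ZX p u /\ chi V (T (chi U u)) <> (fun _ _ => 0).

(* Main.v *)
Require Import Defs.
From HB Require Import structures.
From mathcomp Require Import all_boot all_order all_algebra.
From mathcomp Require Import all_classical all_reals all_analysis.
From mathcomp Require Import complex.
From mathcomp Require Import lra.
Import Order.TTheory GRing.Theory Num.Theory.
Local Open Scope classical_set_scope.
Local Open Scope ring_scope.
Set Implicit Arguments. Unset Strict Implicit.

Lemma esum_T_sub (R : realType) (T : choiceType) (A : set T) (a : T -> \bar R) :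
  (forall i, ~ A i -> a i = 0%E) ->
  (\esum_(i in [set: T]) a i = \esum_(i in A) a i)%E.
Proof.
move=> H; rewrite (esum_mkcond A); apply: eq_esum => i _.
case: (boolP (i \in A)) => [//|]; rewrite notin_setE => /H ->; by [].
Qed.

Lemma esum_sub_le (R : realType) (T : choiceType) (A : set T) (a : T -> \bar R) :
  (forall i, (0 <= a i)%E) ->
  (\esum_(i in A) a i <= \esum_(i in [set: T]) a i)%E.
Proof.
move=> H; rewrite (esum_mkcond A); apply: le_esum => i _.
by case: ifP.
Qed.

Definition phi (X Y : Type) (w : X -> Y) (idx : X -> nat) (k : X * nat) : Y * nat :=
  (w k.1, pickle (idx k.1, k.2)).

Lemma phi_inj (X Y : choiceType) (ZX : set X) (w : X -> Y) (idx : X -> nat) :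
  {in ZX &, injective idx} -> set_inj (ZX `*` setT) (phi w idx).
Proof.
move=> H [a n] [b m]; rewrite !inE => -[/= Za _] [/= Zb _] [] _ /(pcan_inj (@pickleK _)) [].
by move=> /H; rewrite !inE => /(_ Za Zb) -> ->.
Qed.

Definition Vmap (R : realType) (X Y : choiceType) (ZX : set X) (w : X -> Y)
  (idx : X -> nat) (u : X -> nat -> R[i]) : Y -> nat -> R[i] :=
  fun y m => match pselect (exists k, ZX k.1 /\ phi w idx k = (y, m)) with
             | left h => u (projT1 (cid h)).1 (projT1 (cid h)).2
             | right _ => 0 end.

Definition Vpmap (R : realType) (X Y : choiceType) (ZX : set X) (w : X -> Y)
  (idx : X -> nat) (v : Y -> nat -> R[i]) : X -> nat -> R[i] :=
  fun x n => if `[< ZX x >] then v (w x) (pickle (idx x, n)) else 0.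

Lemma Vmap_phi (R : realType) (X Y : choiceType) (ZX : set X) (w : X -> Y)
  (idx : X -> nat) (u : X -> nat -> R[i]) k :
  {in ZX &, injective idx} -> ZX k.1 ->
  Vmap ZX w idx u (phi w idx k).1 (phi w idx k).2 = u k.1 k.2.
Proof.
move=> H Zk; rewrite /Vmap; case: pselect => [h|]; last first.
  by case; exists k; split => //; case: (phi w idx k).
case: cid => k' [Zk' e] /=.
have := @phi_inj X Y ZX w idx H k' k; rewrite !inE => /(_ (conj Zk' I) (conj Zk I)).
by rewrite e -surjective_pairing => /(_ erefl) ->.
Qed.

Lemma Vmap_supp (R : realType) (X Y : choiceType) (ZX : set X) (w : X -> Y)
  (idx : X -> nat) (u : X -> nat -> R[i]) y m :
  Vmap ZX w idx u y m <> 0 ->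
  exists k, [/\ ZX k.1, phi w idx k = (y, m) & Vmap ZX w idx u y m = u k.1 k.2].
Proof.
rewrite /Vmap; case: pselect => [h|] //= _.
by case: cid => k [Zk e] /=; exists k.
Qed.

Lemma pow_normc0 (R : realType) (p : R) : p != 0 ->
  ((Normc.normc (0 : R[i])) `^ p)%:E = 0%E.
Proof. by move=> p0; rewrite Normc.normc0 powR0. Qed.

Lemma lp_sum_Vmap (R : realType) (X Y : choiceType) (ZX : set X) (w : X -> Y)
  (idx : X -> nat) (p : R) (u : X -> nat -> R[i]) :
  p != 0 -> {in ZX &, injective idx} -> (forall x n, ~ ZX x -> u x n = 0) ->
  lp_sum p (Vmap ZX w idx u) = lp_sum p u.
Proof.
move=> p0 H u0; rewrite /lp_sum.
rewrite (@esum_T_sub _ _ (phi w idx @` (ZX `*` setT))); last first.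
  move=> [y m] /= Hn; case: (eqVneq (Vmap ZX w idx u y m) 0) => [->|].
    exact: pow_normc0.
  move=> /eqP nz; have [k [Zk e _]] := Vmap_supp nz; case: Hn; exists k => //.
rewrite esum_image; last exact: phi_inj.
rewrite (@esum_T_sub _ _ (ZX `*` setT) (fun i => ((Normc.normc (u i.1 i.2)) `^ p)%:E)); last first.
  by move=> [x n] /= Hn; rewrite u0 ?pow_normc0 // => Zx; apply: Hn.
by apply: eq_esum => k [Zk _]; rewrite Vmap_phi.
Qed.

Lemma lp_sum_Vpmap (R : realType) (X Y : choiceType) (ZX : set X) (w : X -> Y)
  (idx : X -> nat) (p : R) (v : Y -> nat -> R[i]) :
  p != 0 -> {in ZX &, injective idx} ->
  (lp_sum p (Vpmap ZX w idx v) <= lp_sum p v)%E.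
Proof.
move=> p0 H; rewrite /lp_sum.
rewrite (@esum_T_sub _ _ (ZX `*` setT)); last first.
  by move=> [x n] /= Hn; rewrite /Vpmap asboolF ?pow_normc0 // => Zx; apply: Hn.
rewrite (@eq_esum _ _ _ _ (fun k => ((Normc.normc (v (phi w idx k).1 (phi w idx k).2)) `^ p)%:E)); last first.
  by move=> [x n] [/= Zx _]; rewrite /Vpmap asboolT.
rewrite -(esum_image (ZX `*` setT) (phi w idx) (fun i => ((Normc.normc (v i.1 i.2)) `^ p)%:E)); last exact: phi_inj.
by apply: esum_sub_le => i; rewrite lee_fin powR_ge0.
Qed.

Lemma ball_open (R : realType) (X : Type) (d : X -> X -> R) x r :
  is_metric d -> open_d d (ball_d d x r).
Proof.
move=> [d0 de ds dt] y /= hy; exists (r - d x y); split; first by rewrite subr_gt0.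
move=> z; rewrite /ball_d /= => hz; have := dt x y z; rewrite /ball_d /= in hy; lra.
Qed.

Lemma ball_center (R : realType) (X : Type) (d : X -> X -> R) x r :
  is_metric d -> 0 < r -> ball_d d x r x.
Proof. by move=> [d0 de ds dt] r0; rewrite /ball_d /= (proj2 (de x x) erefl). Qed.

Lemma lp_sum_ge0 (R : realType) (X : choiceType) (p : R) (u : X -> nat -> R[i]) :
  (0 <= lp_sum p u)%E.
Proof. by apply: esum_ge0 => k _; rewrite lee_fin powR_ge0. Qed.

Lemma lp_norm_le (R : realType) (X Y : choiceType) (p : R) (u : X -> nat -> R[i])
  (v : Y -> nat -> R[i]) :
  0 <= p -> (lp_sum p v < +oo)%E -> (lp_sum p u <= lp_sum p v)%E -> lp_norm p u <= lp_norm p v.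
Proof.
move=> p0 vf le; rewrite /lp_norm.
have uf : (lp_sum p u < +oo)%E by apply: le_lt_trans vf.
have fu : lp_sum p u \is a fin_num by rewrite ge0_fin_numE // lp_sum_ge0.
have fv : lp_sum p v \is a fin_num by rewrite ge0_fin_numE // lp_sum_ge0.
apply: ge0_ler_powR.
- by rewrite invr_ge0.
- by rewrite nnegrE fine_ge0 // lp_sum_ge0.
- by rewrite nnegrE fine_ge0 // lp_sum_ge0.
- exact: fine_le.
Qed.

Theorem mainTheorem8 (R : realType) (X Y : choiceType)
  (dX : X -> X -> R) (dY : Y -> Y -> R) (ZX : set X) (ZY : set Y) (p : R) (f : X -> Y) :
  proper_metric dX -> proper_metric dY ->
  countable ZX -> dense_d dX ZX -> countable ZY -> dense_d dY ZY ->
  1 <= p ->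
  continuous_d dX dY f -> coarse_map dX dY f ->
  forall eps : R, 0 < eps ->
  exists (Vf : (X -> nat -> R[i]) -> (Y -> nat -> R[i]))
         (Vfp : (Y -> nat -> R[i]) -> (X -> nat -> R[i])),
    [/\ isometric_op ZX ZY p Vf,
        contractive_op ZY ZX p Vfp,
        (forall u, in_Ep ZX p u -> Vfp (Vf u) = u),
        (forall x y, in_supp dX dY ZX p Vf x y -> dY (f x) y <= eps) &
        (forall y x, in_supp dY dX ZY p Vfp y x -> dY (f x) y <= eps)].
Proof.
move=> [mX _] [mY _] cZX dZX cZY dZY p1 fc fcoarse eps eps0.
have pgt0 : 0 < p by apply: lt_le_trans p1.
have p0 : p != 0 by rewrite gt_eqF.
have pge0 : 0 <= p by apply: ltW.
have /pcard_injP [idx idxI] := cZX.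
have e4 : 0 < eps / 4 by lra.
have [w hw] : exists w : X -> Y, forall x, ZY (w x) /\ dY (f x) (w x) < eps / 2.
  have e2 : 0 < eps / 2 by lra.
  exists (fun x => projT1 (cid (dZY (f x) (eps / 2) e2))) => x.
  by case: cid => z [Zz hz].
have mX' := mX; have mY' := mY.
case: mX' => [dX0 dXe dXs dXt]; case: mY' => [dY0 dYe dYs dYt].
exists (Vmap ZX w idx), (Vpmap ZX w idx); split.
- have inE : forall u, in_Ep ZX p u -> in_Ep ZY p (Vmap ZX w idx u).
    move=> u [u0 uf]; split; last by rewrite lp_sum_Vmap.
    move=> y m nZ; have [//|/eqP nz] := eqVneq (Vmap ZX w idx u y m) 0.
    have [k [Zk e _]] := Vmap_supp nz; case: e => e1 _.
    by case: nZ; rewrite -e1; case: (hw k.1).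
  split; first split.
  + exact: inE.
  + move=> a u v _ _; apply/funext => y; apply/funext => m; rewrite /Vmap.
    by case: pselect => // _; rewrite mulr0 addr0.
  + by exists 1 => u [u0 _]; rewrite mul1r /lp_norm lp_sum_Vmap.
  + by move=> u [u0 _]; rewrite /lp_norm lp_sum_Vmap.
- split; first split.
  + move=> v [v0 vf]; split.
      by move=> x n nZ; rewrite /Vpmap asboolF.
    by apply: le_lt_trans vf; exact: lp_sum_Vpmap.
  + move=> a u v _ _; apply/funext => y; apply/funext => m; rewrite /Vpmap.
    by case: asboolP => // _; rewrite mulr0 addr0.
  + exists 1 => v [v0 vf]; rewrite mul1r; apply: lp_norm_le => //.
    exact: lp_sum_Vpmap.
  + move=> v [v0 vf]; apply: lp_norm_le => //.
    exact: lp_sum_Vpmap.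
- move=> u [u0 _]; apply/funext => x; apply/funext => n; rewrite /Vpmap.
  case: asboolP => Zx; last by rewrite u0.
  exact: (@Vmap_phi R X Y ZX w idx u (x, n) idxI Zx).
- move=> x y Hs; rewrite leNgt; apply/negP => Hlt.
  have [del [del0 Hdel]] := fc x (eps / 4) e4.
  have [u [_ Hu]] := Hs (ball_d dX x del) (ball_d dY y (eps / 4))
    (@ball_open _ _ dX _ _ mX) (@ball_center _ _ dX _ _ mX del0) (@ball_open _ _ dY _ _ mY)
    (@ball_center _ _ dY _ _ mY e4).
  apply: Hu; apply/funext => y'; apply/funext => m; rewrite /chi.
  case: asboolP => // Vy'.
  have [->//|/eqP nz] := eqVneq (Vmap ZX w idx (chi (ball_d dX x del) u) y' m) 0.
  have [k [Zk e ->]] := Vmap_supp nz; rewrite /chi.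
  case: asboolP => // Uk; exfalso; case: e => e1 _.
  have h1 := Hdel k.1 Uk; have [_ h2] := hw k.1.
  rewrite /ball_d /= -e1 in Vy'.
  have t1 := dYt (f x) (f k.1) y; have t2 := dYt (f k.1) (w k.1) y.
  have s1 := dYs (w k.1) y.
  clear -h1 h2 Vy' t1 t2 s1 Hlt; lra.
- move=> y x Hs; rewrite leNgt; apply/negP => Hlt.
  have [del [del0 Hdel]] := fc x (eps / 4) e4.
  have [v [_ Hv]] := Hs (ball_d dY y (eps / 4)) (ball_d dX x del)
    (@ball_open _ _ dY _ _ mY) (@ball_center _ _ dY _ _ mY e4) (@ball_open _ _ dX _ _ mX)
    (@ball_center _ _ dX _ _ mX del0).
  apply: Hv; apply/funext => x'; apply/funext => n; rewrite /chi /Vpmap.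
  case: asboolP => // Vx'; case: asboolP => // _; case: asboolP => // Uw.
  exfalso.
  have h1 := Hdel x' Vx'; have [_ h2] := hw x'.
  rewrite /ball_d /= in Uw.
  have t1 := dYt (f x) (f x') y; have t2 := dYt (f x') (w x') y.
  have s1 := dYs (w x') y.
  clear -h1 h2 Uw t1 t2 s1 Hlt; lra.
Qed.
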